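(* Let $V = W_0 \oplus W \oplus W_1$ be a finite-dimensional real vector space written as a direct sum of subspaces with $W \neq \{0\}$, and let $V_0 = W_0 + W$, $V_1 = W + W_1$. Let $\Gamma_0, \Gamma_1 \leq \operatorname{GL}(V)$ be groups such that for $i = 0,1$: (1) $\Gamma_i V_i = V_i$ and the representation of $\Gamma_i$ on $V_i$ is irreducible; (2) $\Gamma_i$ acts trivially on $W_{1-i}$, i.e. $\gamma w = w$ for all $\gamma \in \Gamma_i$ and $w \in W_{1-i}$. Then the action of the group $\Gamma = \langle \Gamma_0 \cup \Gamma_1 \rangle$ on $V$ is irreducible. *)

(* Defs.v *)
From HB Require Import structures.
From mathcomp Require Import all_boot all_order all_algebra.
Set Implicit Arguments. Unset Strict Implicit. Unset Printing Implicit Defensive.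
Import Order.TTheory GRing.Theory Num.Theory.
Local Open Scope ring_scope.

(* V = 'rV[R]_n (row vectors); a matrix g : 'M[R]_n acts on v by v *m g.
   Subspaces of V are represented by matrices via their row space (mxalgebra). *)

Definition subgroupGL (R : fieldType) (n : nat) (G : 'M[R]_n -> Prop) : Prop :=
  [/\ G 1%:M,
      (forall g h, G g -> G h -> G (g *m h)) &
      (forall g, G g -> g \in unitmx /\ G (invmx g))].

Inductive gen_group (R : fieldType) (n : nat) (A B : 'M[R]_n -> Prop)
  : 'M[R]_n -> Prop :=
  | gen_inl g : A g -> gen_group A B g
  | gen_inr g : B g -> gen_group A B g
  | gen_one : gen_group A B 1%:M
  | gen_mul g h : gen_group A B g -> gen_group A B h -> gen_group A B (g *m h)
  | gen_inv g : gen_group A B g -> gen_group A B (invmx g).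

Definition irreducible_on (R : fieldType) (n : nat) (G : 'M[R]_n -> Prop)
  (U : 'M[R]_n) : Prop :=
  U != 0 /\
  forall X : 'M[R]_n, (X <= U)%MS ->
    (forall g, G g -> (X *m g <= X)%MS) ->
    X = 0 \/ (X == U)%MS.

(* Main.v *)
Require Import Defs.
From HB Require Import structures.
From mathcomp Require Import all_boot all_order all_algebra.
Import Order.TTheory GRing.Theory Num.Theory.
Local Open Scope ring_scope.

Lemma cap_inv (R : fieldType) (n : nat) (G : 'M[R]_n -> Prop) (V X : 'M[R]_n) :
  (forall g, G g -> (V *m g == V)%MS) ->
  (forall g, G g -> (X *m g <= X)%MS) ->
  forall g, G g -> ((X :&: V)%MS *m g <= (X :&: V)%MS)%MS.
Proof.
move=> HV HX g Gg; rewrite sub_capmx; apply/andP; split.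
  exact: submx_trans (submxMr _ (capmxSl _ _)) (HX g Gg).
apply: submx_trans (submxMr _ (capmxSr _ _)) _.
by case/andP: (HV g Gg).
Qed.

Theorem lemmaA4 (R : realFieldType) (n : nat) (W0 W W1 : 'M[R]_n)
  (G0 G1 : 'M[R]_n -> Prop) :
  mxdirect (W0 + W + W1) ->
  (W0 + W + W1 == 1%:M)%MS ->
  W != 0 ->
  subgroupGL G0 -> subgroupGL G1 ->
  (forall g, G0 g -> ((W0 + W)%MS *m g == (W0 + W)%MS)%MS) ->
  (forall g, G1 g -> ((W + W1)%MS *m g == (W + W1)%MS)%MS) ->
  irreducible_on G0 (W0 + W)%MS ->
  irreducible_on G1 (W + W1)%MS ->
  (forall g, G0 g -> forall w : 'rV[R]_n, (w <= W1)%MS -> w *m g = w) ->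
  (forall g, G1 g -> forall w : 'rV[R]_n, (w <= W0)%MS -> w *m g = w) ->
  irreducible_on (gen_group G0 G1) 1%:M.
Proof.
move=> _ Hfull W_nz _ _ HV0 HV1 [_ Irr0] [_ Irr1] Fix0 _.
split.
  apply/eqP=> H1; move/eqP: W_nz; apply; by rewrite -[W]mulmx1 H1 mulmx0.
move=> X _ HX.
have HX0 : forall g, G0 g -> (X *m g <= X)%MS by move=> g Gg; apply: HX; apply: gen_inl.
have HX1 : forall g, G1 g -> (X *m g <= X)%MS by move=> g Gg; apply: HX; apply: gen_inr.
have one_sub : (1%:M <= W0 + W + W1)%MS by case/andP: Hfull.
have allX : (W0 + W + W1 <= X)%MS -> (X == 1%:M)%MS.
  by move=> s; rewrite /eqmx submx1 (submx_trans one_sub s).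
have [Y0|Y0] := Irr0 _ (capmxSr _ _) (@cap_inv _ _ _ _ _ HV0 HX0).
- have [Y1|Y1] := Irr1 _ (capmxSr _ _) (@cap_inv _ _ _ _ _ HV1 HX1).
  +
    case: (eqVneq X 0) => [->|Xnz]; first by left.
    exfalso.
    set x := nz_row X.
    have xnz : x != 0 by rewrite nz_row_eq0.
    have xX : (x <= X)%MS by apply: nz_row_sub.
    have : (x <= (W0 + W) + W1)%MS by apply: submx_trans one_sub; apply: submx1.
    case/sub_addsmxP=> u xE.
    set p := u.1 *m (W0 + W)%MS in xE; set c := u.2 *m W1 in xE.
    have capz0 : forall r : 'rV[R]_n, (r <= X)%MS -> (r <= (W0 + W))%MS -> r = 0.
      move=> r rX rV; apply/eqP; rewrite -submx0 -Y0; by rewrite sub_capmx rX rV.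
    have capz1 : forall r : 'rV[R]_n, (r <= X)%MS -> (r <= (W + W1))%MS -> r = 0.
      move=> r rX rV; apply/eqP; rewrite -submx0 -Y1; by rewrite sub_capmx rX rV.
    have pfix : forall g, G0 g -> p *m g = p.
      move=> g Gg.
      have cg : c *m g = c by apply: Fix0 => //; apply: submxMl.
      apply/eqP; rewrite -subr_eq0; apply/eqP; apply: capz0.
      * have -> : p *m g - p = x *m g - x by rewrite xE mulmxDl cg opprD addrACA subrr addr0.
        apply: addmx_sub; first exact: submx_trans (submxMr _ xX) (HX0 g Gg).
        by rewrite (eqmx_opp x).
      * apply: addmx_sub; last by rewrite (eqmx_opp p) submxMl.
        apply: submx_trans (submxMr _ (submxMl _ _)) _.
        by case/andP: (HV0 g Gg).
    have P0s : (<<p>> <= W0 + W)%MS by rewrite genmxE submxMl.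
    have P0i : forall g, G0 g -> (<<p>>%MS *m g <= <<p>>)%MS.
      move=> g Gg; by rewrite (eqmxMr _ (genmxE p)) genmxE pfix.
    have [P0|P0] := Irr0 _ P0s P0i.
      move: P0 => /eqP; rewrite -submx0 genmxE submx0 => /eqP p0.
        move/eqP: xnz; apply; apply: capz1 => //.
        by rewrite xE p0 add0r; apply: submx_trans (submxMl _ _) (addsmxSr _ _).
    have sWp : (W <= <<p>>)%MS.
      by apply: submx_trans (addsmxSr W0 W) _; case/andP: P0.
    have spW : (<<p>> <= W)%MS.
      rewrite -(mxrank_leqif_sup sWp).2 eqn_leq (mxrankS sWp) /=.
      rewrite genmxE; apply: leq_trans (rank_leq_row p) _.
      by rewrite lt0n mxrank_eq0.
    move/eqP: xnz; apply; apply: capz1 => //.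
    rewrite xE; apply: addmx_sub.
      apply: submx_trans (addsmxSl W W1).
      by rewrite -(genmxE p).
    exact: submx_trans (submxMl _ _) (addsmxSr _ _).
  + exfalso.
    have sV1X : (W + W1 <= X)%MS.
      case/andP: Y1 => _ H; exact: submx_trans H (capmxSl X (W + W1)%MS).
    have : (W <= X :&: (W0 + W))%MS.
      by rewrite sub_capmx (submx_trans (addsmxSl W W1) sV1X) addsmxSr.
    by rewrite Y0 submx0 (negbTE W_nz).
- have sV0X : (W0 + W <= X)%MS.
    case/andP: Y0 => _ H; exact: submx_trans H (capmxSl X (W0 + W)%MS).
  have [Y1|Y1] := Irr1 _ (capmxSr _ _) (@cap_inv _ _ _ _ _ HV1 HX1).
  + exfalso.
    have : (W <= X :&: (W + W1))%MS.
      by rewrite sub_capmx (submx_trans (addsmxSr W0 W) sV0X) addsmxSl.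
    by rewrite Y1 submx0 (negbTE W_nz).
  + have sV1X : (W + W1 <= X)%MS.
      case/andP: Y1 => _ H; exact: submx_trans H (capmxSl X (W + W1)%MS).
    right; apply: allX; move: sV0X sV1X; rewrite !addsmx_sub.
    by case/andP=> -> -> /andP[_ ->].
Qed.
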